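(* Let $(\alpha_n)_{n\ge1}$ and $(\beta_n)_{n\ge1}$ be increasing sequences of real numbers with $\alpha_n\le\beta_n\le\alpha_{n+1}$ for all $n$, $\alpha_1>1$, and $\sum_n\alpha_n^{-\lambda}<\infty$ for every $\lambda>1$. Then: (1) The Euler products $E_1(s)=\prod_n(1-\alpha_n^{-s})^{-1}$ and $E_2(s)=\prod_n(1-\beta_n^{-s})^{-1}$ are well defined and analytic on $\{\operatorname{Re}(s)>1\}$. (2) There exists a function $f$, analytic and nowhere vanishing on $\{\operatorname{Re}(s)>0\}$, such that $E_1(s)=E_2(s)f(s)$ for $\operatorname{Re}(s)>1$. *)

(* Defs.v *)
From Stdlib Require Import Reals.
From Coquelicot Require Export Coquelicot.
Open Scope R_scope.

Definition cexp (z : C) : C :=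
  (exp (Re z) * cos (Im z), exp (Re z) * sin (Im z)).

Definition rpow_neg (a : R) (s : C) : C := cexp (Copp s * RtoC (ln a)).

Definition euler_factor (a : R) (s : C) : C := Cinv (Cminus 1 (rpow_neg a s)).

(* Partial Euler product  prod_{k < N} (1 - a_k^(-s))^(-1)  (a_0 is the paper's a_1). *)
Fixpoint euler_partial (a : nat -> R) (s : C) (N : nat) : C :=
  match N with
  | O => 1%C
  | S N' => Cmult (euler_partial a s N') (euler_factor (a N') s)
  end.

Definition euler_product_converges_to (a : nat -> R) (s : C) (L : C) : Prop :=
  filterlim (euler_partial a s) eventually (locally L).

(* Complex analytic (= holomorphic: complex differentiable at every point)
   on the set U. *)
Definition analytic_on (U : C -> Prop) (f : C -> C) : Prop :=
  forall z, U z -> @ex_derive C_AbsRing C_NormedModule f z.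

Definition half_plane (c : R) (s : C) : Prop := Re s > c.

(* Main.v *)
Require Import Defs.
From Stdlib Require Import Reals Lra Lia ClassicalEpsilon.
From Coquelicot Require Import Coquelicot.
Open Scope R_scope.


Lemma ball_Cmod (z y : C) (e : R) : @ball C_UniformSpace z e y -> Cmod (y - z)%C < 2 * e.
Proof.
intros [H1 H2]. change (Rabs (fst y - fst z) < e) in H1. change (Rabs (snd y - snd z) < e) in H2.
eapply Rle_lt_trans. apply Cmod_2Rmax.
replace (fst (y-z)%C) with (fst y - fst z) by (simpl; ring).
replace (snd (y-z)%C) with (snd y - snd z) by (simpl; ring).
assert (Hs : sqrt 2 < 2). { rewrite <- (sqrt_Rsqr 2) at 2 by lra. apply sqrt_lt_1; unfold Rsqr; lra. }
assert (0 <= Rmax (Rabs (fst y - fst z)) (Rabs (snd y - snd z))) by (eapply Rle_trans; [apply Rabs_pos| apply Rmax_l]).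
assert (Rmax (Rabs (fst y - fst z)) (Rabs (snd y - snd z)) < e).
{ apply Rmax_lub_lt; lra. }
assert (0 < sqrt 2) by (apply sqrt_lt_R0; lra).
nra.
Qed.
Lemma Cderiv_iff (f : C -> C) (z l : C) :
  @is_derive C_AbsRing C_NormedModule f z l <->
  (forall eps, 0 < eps -> exists delta, 0 < delta /\ forall h, Cmod h < delta ->
     Cmod (f (z + h)%C - f z - l * h)%C <= eps * Cmod h).
Proof.
split.
- intros [_ Hd] eps Heps.
  specialize (Hd z (fun P H => H)).
  specialize (Hd (mkposreal eps Heps)).
  apply (@locally_le_locally_norm C_AbsRing C_NormedModule) in Hd.
  destruct Hd as [d Hd].
  exists d; split; [apply cond_pos|].
  intros h Hh.
  specialize (Hd (z + h)%C).
  assert (Hb : @ball C_NormedModule z d (z + h)%C).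
  { apply norm_compat1. change (Cmod (Cminus (z+h)%C z) < d).
    replace (Cminus (z+h)%C z) with h by ring. exact Hh. }
  specialize (Hd Hb).
  change (Cmod (Cminus (Cminus (f (z + h)%C) (f z)) (Cmult (Cminus (z+h)%C z) l)) <= eps * Cmod (Cminus (z+h)%C z)) in Hd.
  replace (Cminus (z+h)%C z) with h in Hd.
  replace (f (z + h)%C - f z - l * h)%C with (Cminus (Cminus (f (z + h)%C) (f z)) (Cmult h l)).
  now apply Hd. ring. ring.
- intros H. split.
  + apply is_linear_scal_l.
  + intros x Hx. apply (@is_filter_lim_locally_unique C_AbsRing (AbsRing_NormedModule C_AbsRing)) in Hx. subst x.
    intros [eps Heps].
    apply (@locally_norm_le_locally C_AbsRing C_NormedModule).
    destruct (H eps Heps) as [d [Hd0 Hd]].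
    assert (Hd2 : 0 < d/2) by lra.
    exists (mkposreal (d/2) Hd2). intros y Hy. change C in y.
    apply ball_Cmod in Hy. simpl in Hy.
    assert (Hy' : Cmod (y - z)%C < d) by lra.
    specialize (Hd (Cminus y z) Hy').
    change (Cmod (Cminus (Cminus (f y) (f z)) (Cmult (Cminus y z) l)) <= eps * Cmod (Cminus y z)).
    replace (z + (y - z))%C with y in Hd by ring.
    replace (Cminus (Cminus (f y) (f z)) (Cmult (Cminus y z) l)) with (f y - f z - l * (y - z))%C by ring.
    exact Hd.
Qed.

Lemma Aderiv_iff (f : C -> C) (z l : C) :
  @is_derive C_AbsRing (AbsRing_NormedModule C_AbsRing) f z l <->
  (forall eps, 0 < eps -> exists delta, 0 < delta /\ forall h, Cmod h < delta ->
     Cmod (f (z + h)%C - f z - l * h)%C <= eps * Cmod h).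
Proof.
split.
- intros [_ Hd] eps Heps.
  specialize (Hd z (fun P H => H)).
  specialize (Hd (mkposreal eps Heps)).
  apply (@locally_le_locally_norm C_AbsRing (AbsRing_NormedModule C_AbsRing)) in Hd.
  destruct Hd as [d Hd].
  exists d; split; [apply cond_pos|].
  intros h Hh.
  specialize (Hd (z + h)%C).
  assert (Hb : @ball (AbsRing_NormedModule C_AbsRing) z d (z + h)%C).
  { apply norm_compat1. change (Cmod (Cminus (z+h)%C z) < d).
    replace (Cminus (z+h)%C z) with h by ring. exact Hh. }
  specialize (Hd Hb).
  change (Cmod (Cminus (Cminus (f (z + h)%C) (f z)) (Cmult (Cminus (z+h)%C z) l)) <= eps * Cmod (Cminus (z+h)%C z)) in Hd.
  replace (Cminus (z+h)%C z) with h in Hd.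
  replace (f (z + h)%C - f z - l * h)%C with (Cminus (Cminus (f (z + h)%C) (f z)) (Cmult h l)).
  now apply Hd. ring. ring.
- intros H. split.
  + apply is_linear_scal_l.
  + intros x Hx. apply (@is_filter_lim_locally_unique C_AbsRing (AbsRing_NormedModule C_AbsRing)) in Hx. subst x.
    intros [eps Heps].
    apply (@locally_norm_le_locally C_AbsRing (AbsRing_NormedModule C_AbsRing)).
    destruct (H eps Heps) as [d [Hd0 Hd]].
    assert (Hd2 : 0 < d/2) by lra.
    exists (mkposreal (d/2) Hd2). intros y Hy. change C in y.
    change (Cmod (Cminus y z) < d/2) in Hy.
    assert (Hy' : Cmod (y - z)%C < d) by lra.
    specialize (Hd (Cminus y z) Hy').
    change (Cmod (Cminus (Cminus (f y) (f z)) (Cmult (Cminus y z) l)) <= eps * Cmod (Cminus y z)).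
    replace (z + (y - z))%C with y in Hd by ring.
    replace (Cminus (Cminus (f y) (f z)) (Cmult (Cminus y z) l)) with (f y - f z - l * (y - z))%C by ring.
    exact Hd.
Qed.

Lemma A2C f z l : @is_derive C_AbsRing (AbsRing_NormedModule C_AbsRing) f z l -> @is_derive C_AbsRing C_NormedModule f z l.
Proof. intros H. apply Cderiv_iff. apply Aderiv_iff. exact H. Qed.
Lemma C2A f z l : @is_derive C_AbsRing C_NormedModule f z l -> @is_derive C_AbsRing (AbsRing_NormedModule C_AbsRing) f z l.
Proof. intros H. apply Aderiv_iff. apply Cderiv_iff. exact H. Qed.



Lemma Cmod_re_le (c : C) : Rabs (fst c) <= Cmod c.
Proof. unfold Cmod. rewrite <- sqrt_Rsqr_abs. apply sqrt_le_1_alt. unfold Rsqr. simpl. nra. Qed.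
Lemma Cmod_im_le (c : C) : Rabs (snd c) <= Cmod c.
Proof. unfold Cmod. rewrite <- sqrt_Rsqr_abs. apply sqrt_le_1_alt. unfold Rsqr. simpl. nra. Qed.
Lemma Cmod_le_sum (c : C) : Cmod c <= Rabs (fst c) + Rabs (snd c).
Proof.
unfold Cmod. rewrite <- (sqrt_Rsqr (Rabs (fst c) + Rabs (snd c))).
2:{ pose proof (Rabs_pos (fst c)); pose proof (Rabs_pos (snd c)); lra. }
apply sqrt_le_1_alt. unfold Rsqr. simpl.
pose proof (Rabs_pos (fst c)); pose proof (Rabs_pos (snd c)).
pose proof (Rsqr_abs (fst c)); pose proof (Rsqr_abs (snd c)); unfold Rsqr in *; nra.
Qed.

Lemma dpl_bound (f : R -> R) (l : R) : derivable_pt_lim f 0 l ->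
  forall eps, 0 < eps -> exists d, 0 < d /\ forall x, Rabs x < d -> Rabs (f x - f 0 - l * x) <= eps * Rabs x.
Proof.
intros H eps Heps. destruct (H eps Heps) as [d Hd]. exists d; split; [apply cond_pos|].
intros x Hx. destruct (Req_dec x 0) as [->|Hx0].
- replace (f 0 - f 0 - l * 0) with 0 by ring. rewrite Rabs_R0. lra.
- specialize (Hd x Hx0 Hx). rewrite Rplus_0_l in Hd.
  replace (f x - f 0 - l * x) with (((f x - f 0)/x - l) * x) by (field; auto).
  rewrite Rabs_mult. apply Rmult_le_compat_r. apply Rabs_pos. lra.
Qed.

Lemma cexp_plus (a b : C) : cexp (a + b)%C = (cexp a * cexp b)%C.
Proof.
unfold cexp. destruct a as [a1 a2], b as [b1 b2]. simpl.
rewrite exp_plus, cos_plus, sin_plus. apply injective_projections; simpl; ring.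
Qed.

Lemma Cmod_cexp (z : C) : Cmod (cexp z) = exp (fst z).
Proof.
transitivity (sqrt (Rsqr (exp (fst z)))).
2:{ apply sqrt_Rsqr. left; apply exp_pos. }
unfold Cmod, cexp, Re, Im. simpl. f_equal.
pose proof (sin2_cos2 (snd z)). unfold Rsqr in *.
transitivity (exp (fst z) * exp (fst z) * (sin (snd z) * sin (snd z) + cos (snd z) * cos (snd z))).
ring. rewrite H. ring.
Qed.

Lemma cexp_small (eps : R) : 0 < eps -> exists d, 0 < d /\ forall h, Cmod h < d ->
  Cmod (cexp h - 1 - h)%C <= eps * Cmod h.
Proof.
intros Heps.
set (e := Rmin 1 (eps / 40)).
assert (He : 0 < e) by (unfold e; apply Rmin_pos; lra).
assert (He1 : e <= 1) by apply Rmin_l.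
assert (He2 : e <= eps/40) by apply Rmin_r.
destruct (dpl_bound exp 1 ltac:(rewrite <- exp_0; apply derivable_pt_lim_exp) e He) as [d1 [Hd1 H1]].
destruct (dpl_bound cos 0 ltac:(replace 0 with (- sin 0) at 2 by (rewrite sin_0; ring); apply derivable_pt_lim_cos) e He) as [d2 [Hd2 H2]].
destruct (dpl_bound sin 1 ltac:(rewrite <- cos_0; apply derivable_pt_lim_sin) e He) as [d3 [Hd3 H3]].
exists (Rmin (Rmin d1 d2) (Rmin d3 (Rmin 1 e))). split.
{ repeat apply Rmin_pos; lra. }
intros [p q] Hh.
assert (Hp : Rabs p <= Cmod (p,q)) by apply (Cmod_re_le (p,q)).
assert (Hq : Rabs q <= Cmod (p,q)) by apply (Cmod_im_le (p,q)).
assert (Hm1 : Cmod (p,q) < d1) by (eapply Rlt_le_trans; [exact Hh|]; eapply Rle_trans; apply Rmin_l).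
assert (Hm2 : Cmod (p,q) < d2) by (eapply Rlt_le_trans; [exact Hh|]; eapply Rle_trans; [apply Rmin_l|apply Rmin_r]).
assert (Hm3 : Cmod (p,q) < d3) by (eapply Rlt_le_trans; [exact Hh|]; eapply Rle_trans; [apply Rmin_r|apply Rmin_l]).
assert (Hm4 : Cmod (p,q) < 1) by (eapply Rlt_le_trans; [exact Hh|]; eapply Rle_trans; [apply Rmin_r|]; eapply Rle_trans; apply Rmin_r || apply Rmin_l).
assert (Hm5 : Cmod (p,q) < e) by (eapply Rlt_le_trans; [exact Hh|]; eapply Rle_trans; [apply Rmin_r|]; eapply Rle_trans; apply Rmin_r).
specialize (H1 p ltac:(lra)). specialize (H2 q ltac:(lra)). specialize (H3 q ltac:(lra)).
rewrite exp_0 in H1. rewrite cos_0 in H2. rewrite sin_0 in H3.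
eapply Rle_trans. apply Cmod_le_sum. simpl.
set (m := Cmod (p,q)) in *.
assert (Hep : exp p <= 3).
{ apply Rle_trans with (exp 1). destruct (Rle_lt_dec p 1). destruct r. left; apply exp_increasing; auto. subst; lra.
  pose proof (Rle_abs p). lra. apply exp_le_3. }
assert (Hep0 : 0 < exp p) by apply exp_pos.
assert (Hs : Rabs (sin q) <= 1) by (apply Rabs_le; apply SIN_bound).
assert (A1 : Rabs (exp p * cos q + - (1) + - p) <= Rabs (exp p - 1 - 1 * p) + exp p * Rabs (cos q - 1 - 0 * q)).
{ replace (exp p * cos q + - (1) + - p) with ((exp p - 1 - 1*p) + exp p * (cos q - 1 - 0 * q)) by ring.
  eapply Rle_trans. apply Rabs_triang. rewrite Rabs_mult, (Rabs_right (exp p)) by lra. lra. }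
assert (A2 : Rabs (exp p * sin q + - (0) + - q) <= Rabs (exp p - 1 - 1 * p) * Rabs (sin q) + Rabs p * Rabs (sin q) + Rabs (sin q - 0 - 1 * q)).
{ replace (exp p * sin q + - (0) + - q) with ((exp p - 1 - 1*p) * sin q + p * sin q + (sin q - 0 - 1 * q)) by ring.
  eapply Rle_trans. apply Rabs_triang.
  pose proof (Rabs_triang ((exp p - 1 - 1 * p) * sin q) (p * sin q)). rewrite !Rabs_mult in H. lra. }
assert (A3 : Rabs (sin q) <= (1 + e) * m).
{ replace (sin q) with ((sin q - 0 - 1 * q) + q) by ring. eapply Rle_trans. apply Rabs_triang. nra. }
assert (Hm0 : 0 <= m) by apply Cmod_ge_0.
assert (A4 : Rabs p * Rabs (sin q) <= m * ((1+e) * m)).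
{ apply Rmult_le_compat; auto using Rabs_pos. }
assert (A5 : Rabs (exp p - 1 - 1 * p) * Rabs (sin q) <= e * m).
{ apply Rle_trans with (Rabs (exp p - 1 - 1 * p) * 1). apply Rmult_le_compat_l; [apply Rabs_pos|exact Hs]. nra. }
assert (B1 : exp p * Rabs (cos q - 1 - 0 * q) <= 3 * (e * m)).
{ apply Rmult_le_compat; try lra. apply Rabs_pos. nra. }
assert (B2 : m * ((1 + e) * m) <= 2 * (e * m)) by nra.
assert (B3 : e * m <= eps / 40 * m) by nra.
nra.
Qed.

Lemma is_derive_cexp (z : C) : @is_derive C_AbsRing C_NormedModule cexp z (cexp z).
Proof.
apply Cderiv_iff. intros eps Heps.
assert (Hc : 0 < Cmod (cexp z)) by (rewrite Cmod_cexp; apply exp_pos).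
destruct (cexp_small (eps / Cmod (cexp z))) as [d [Hd H]].
{ apply Rdiv_lt_0_compat; lra. }
exists d; split; auto. intros h Hh.
replace (cexp (z + h) - cexp z - cexp z * h)%C with (cexp z * (cexp h - 1 - h))%C
  by (rewrite cexp_plus; ring).
rewrite Cmod_mult. specialize (H h Hh).
apply Rmult_le_compat_l with (r := Cmod (cexp z)) in H; [|lra].
replace (eps * Cmod h) with (Cmod (cexp z) * (eps / Cmod (cexp z) * Cmod h)) by (field; lra).
exact H.
Qed.


Notation CD f z l := (@is_derive C_AbsRing C_NormedModule f z l).

Lemma CD_ext f g z l : (forall y, f y = g y) -> CD f z l -> CD g z l.
Proof. intros H. apply is_derive_ext. exact H. Qed.
Lemma CD_const (a z : C) : CD (fun _ => a) z (RtoC 0).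
Proof. apply (@is_derive_const C_AbsRing C_NormedModule). Qed.
Lemma CD_id (z : C) : CD (fun y => y) z (RtoC 1).
Proof. apply A2C. exact (@is_derive_id C_AbsRing z). Qed.
Lemma CD_plus f g z df dg : CD f z df -> CD g z dg -> CD (fun y => f y + g y)%C z (df + dg)%C.
Proof. intros H1 H2. exact (@is_derive_plus C_AbsRing C_NormedModule f g z df dg H1 H2). Qed.
Lemma CD_minus f g z df dg : CD f z df -> CD g z dg -> CD (fun y => f y - g y)%C z (df - dg)%C.
Proof. intros H1 H2. exact (@is_derive_minus C_AbsRing C_NormedModule f g z df dg H1 H2). Qed.
Lemma CD_opp f z df : CD f z df -> CD (fun y => - f y)%C z (- df)%C.
Proof. intros H1. exact (@is_derive_opp C_AbsRing C_NormedModule f z df H1). Qed.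
Lemma CD_mult f g z df dg : CD f z df -> CD g z dg -> CD (fun y => f y * g y)%C z (df * g z + f z * dg)%C.
Proof. intros H1 H2. apply A2C. exact (@is_derive_mult C_AbsRing f g z df dg (C2A _ _ _ H1) (C2A _ _ _ H2) Cmult_comm). Qed.
Lemma CD_comp f g z df dg : CD f (g z) df -> CD g z dg -> CD (fun y => f (g y)) z (dg * df)%C.
Proof. intros H1 H2. exact (@is_derive_comp C_AbsRing C_NormedModule f g z df dg H1 (C2A _ _ _ H2)). Qed.

Lemma CD_inv (z : C) : z <> 0%C -> CD Cinv z (- / (z * z))%C.
Proof.
intros Hz. apply Cderiv_iff. intros eps Heps.
assert (Hm : 0 < Cmod z) by (apply Cmod_gt_0; auto).
exists (Rmin (Cmod z / 2) (eps * (Cmod z * Cmod z * Cmod z) / 2)). split.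
{ apply Rmin_pos. lra. apply Rdiv_lt_0_compat; [|lra]. repeat apply Rmult_lt_0_compat; auto. }
intros h Hh.
assert (H1 : Cmod h < Cmod z / 2) by (eapply Rlt_le_trans; [exact Hh| apply Rmin_l]).
assert (H2 : Cmod h < eps * (Cmod z * Cmod z * Cmod z) / 2) by (eapply Rlt_le_trans; [exact Hh| apply Rmin_r]).
assert (Hzh : Cmod z / 2 <= Cmod (z + h)%C).
{ pose proof (Cmod_triangle (z + h)%C (- h)%C). rewrite Cmod_opp in H.
  replace (z + h + - h)%C with z in H by ring. lra. }
assert (Hzh0 : (z + h)%C <> 0%C).
{ intros E. rewrite E, Cmod_0 in Hzh. lra. }
replace (/ (z + h) - / z - - / (z * z) * h)%C with (h * h / (z * z * (z + h)))%C by (field; auto).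
rewrite Cmod_div. 2:{ repeat apply Cmult_neq_0; auto. }
rewrite !Cmod_mult.
assert (0 <= Cmod h) by apply Cmod_ge_0.
apply Rmult_le_reg_r with (Cmod z * Cmod z * Cmod (z + h)%C).
{ apply Rmult_lt_0_compat; [nra|lra]. }
unfold Rdiv. rewrite Rmult_assoc, Rinv_l, Rmult_1_r by (apply Rgt_not_eq; apply Rmult_lt_0_compat; [nra|lra]).
assert (Cmod h * Cmod h <= Cmod h * (eps * (Cmod z * Cmod z * Cmod z) / 2)) by (apply Rmult_le_compat_l; lra).
assert (eps * (Cmod z * Cmod z * Cmod z) / 2 <= eps * (Cmod z * Cmod z * Cmod (z+h)%C)).
{ assert (0 < Cmod z * Cmod z) by nra. 
  assert (Cmod z * Cmod z * (Cmod z /2) <= Cmod z * Cmod z * Cmod (z+h)%C) by (apply Rmult_le_compat_l; lra).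
  nra. }
nra.
Qed.

Lemma CD_scal_l (c : C) f z df : CD f z df -> CD (fun y => c * f y)%C z (c * df)%C.
Proof.
intros H. pose proof (CD_mult (fun _ => c) f z (RtoC 0) df (CD_const c z) H) as H2.
replace (c * df)%C with (RtoC 0 * f z + c * df)%C by ring. exact H2.
Qed.

Lemma CD_lin (c z : C) : CD (fun y => c * y)%C z c.
Proof. pose proof (CD_scal_l c (fun y => y) z _ (CD_id z)) as H. replace (c * RtoC 1)%C with c in H by ring. exact H. Qed.

Lemma CD_cexp_lin (c z : C) : CD (fun y => cexp (c * y))%C z (c * cexp (c * z))%C.
Proof.
apply (CD_comp cexp (fun y => c * y)%C). apply is_derive_cexp. apply CD_lin.
Qed.

Lemma CD_Cinv_fun f z df : CD f z df -> f z <> RtoC 0 -> CD (fun y => / f y)%C z (- df / (f z * f z))%C.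
Proof.
intros H Hz. pose proof (CD_comp Cinv f z _ df (CD_inv (f z) Hz) H) as H2.
replace (- df / (f z * f z))%C with (df * - / (f z * f z))%C by (field; auto). exact H2.
Qed.


Lemma real_restrict (F : C -> C) (z w c : C) (t : R) (l : C) :
  CD F (z + RtoC t * w)%C l ->
  is_derive (fun s : R => fst (c * F (z + RtoC s * w))%C) t (fst (c * (l * w)))%C.
Proof.
intros HF. apply is_derive_Reals. intros eps Heps.
rewrite Cderiv_iff in HF.
set (K := Cmod c * Cmod w + 1).
assert (HK : 0 < K) by (unfold K; pose proof (Cmod_ge_0 c); pose proof (Cmod_ge_0 w); nra).
destruct (HF (eps / (2 * K))) as [d [Hd Hd']].
{ apply Rdiv_lt_0_compat; lra. }
assert (Hw : 0 < Cmod w + 1) by (pose proof (Cmod_ge_0 w); lra).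
exists (mkposreal (d / (Cmod w + 1)) (Rdiv_lt_0_compat _ _ Hd Hw)).
intros h Hh0 Hh. simpl in Hh.
specialize (Hd' (RtoC h * w)%C).
assert (Hhw : Cmod (RtoC h * w)%C < d).
{ rewrite Cmod_mult, Cmod_R. apply Rmult_lt_compat_r with (r := Cmod w + 1) in Hh; [|lra].
  unfold Rdiv in Hh. rewrite Rmult_assoc, Rinv_l, Rmult_1_r in Hh by lra.
  pose proof (Rabs_pos h). pose proof (Cmod_ge_0 w). nra. }
specialize (Hd' Hhw).
replace (z + RtoC (t + h) * w)%C with (z + RtoC t * w + RtoC h * w)%C
  by (rewrite RtoC_plus; ring).
set (A := F (z + RtoC t * w + RtoC h * w)%C) in *.
set (B := F (z + RtoC t * w)%C) in *.
replace ((fst (c * A)%C - fst (c * B)%C) / h - fst (c * (l * w))%C)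
  with (fst (c * (A - B - l * (RtoC h * w)))%C / h).
2:{ simpl. field. auto. }
unfold Rdiv. rewrite Rabs_mult, Rabs_inv.
apply Rmult_lt_reg_r with (Rabs h). apply Rabs_pos_lt; auto.
rewrite Rmult_assoc, Rinv_l, Rmult_1_r by (apply Rabs_no_R0; auto).
eapply Rle_lt_trans. apply Cmod_re_le. rewrite Cmod_mult.
rewrite Cmod_mult, Cmod_R in Hd'.
assert (0 <= Cmod c) by apply Cmod_ge_0.
assert (H1 : Cmod c * Cmod (A - B - l * (RtoC h * w))%C <= Cmod c * (eps / (2 * K) * (Rabs h * Cmod w)))
  by (apply Rmult_le_compat_l; auto).
assert (H2 : Cmod c * (eps / (2 * K) * (Rabs h * Cmod w)) = (Cmod c * Cmod w) / K * (eps / 2) * Rabs h) by (field; lra).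
assert (H3 : (Cmod c * Cmod w) / K <= 1).
{ apply Rmult_le_reg_r with K. lra.
  unfold Rdiv. rewrite Rmult_assoc, Rinv_l, Rmult_1_r, Rmult_1_l by lra. unfold K; lra. }
assert (H4 : 0 < Rabs h) by (apply Rabs_pos_lt; auto).
assert (0 <= (Cmod c * Cmod w) / K) by (apply Rdiv_le_0_compat; [pose proof (Cmod_ge_0 w); nra | lra]).
assert (H5 : (Cmod c * Cmod w) / K * (eps / 2) * Rabs h <= 1 * (eps / 2) * Rabs h).
{ apply Rmult_le_compat_r; [lra|]. apply Rmult_le_compat_r; lra. }
assert (0 < eps * Rabs h) by (apply Rmult_lt_0_compat; lra). lra.
Qed.

Lemma unit_rot (d : C) : exists c : C, Cmod c <= 1 /\ fst (c * d)%C = Cmod d.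
Proof.
destruct (Ceq_dec d (RtoC 0)) as [->|Hd].
- exists (RtoC 0). rewrite Cmod_0. split. lra. simpl. ring.
- assert (Hm : 0 < Cmod d) by (apply Cmod_gt_0; auto).
  exists (Cconj d / RtoC (Cmod d))%C. split.
  + rewrite Cmod_div, Cmod_conj, Cmod_R, Rabs_right by (try lra; intros E; apply RtoC_inj in E; lra).
    unfold Rdiv. rewrite Rinv_r by lra. lra.
  + replace (Cconj d / RtoC (Cmod d) * d)%C with (d * Cconj d / RtoC (Cmod d))%C.
    2:{ field. intros E; apply RtoC_inj in E; lra. }
    rewrite <- Cmod2_conj. rewrite <- RtoC_div by lra. simpl. field. lra.
Qed.

Lemma seg_bound (F F' : C -> C) (z w : C) (H H' : R -> R) :
  (forall t, 0 <= t <= 1 -> CD F (z + RtoC t * w)%C (F' (z + RtoC t * w)%C)) ->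
  (forall t, 0 <= t <= 1 -> is_derive H t (H' t)) ->
  (forall t, 0 <= t <= 1 -> Cmod (F' (z + RtoC t * w) * w)%C <= - H' t) ->
  Cmod (F (z + w) - F z)%C <= H 0 - H 1.
Proof.
intros HF HH Hb.
destruct (unit_rot (F (z + w) - F z)%C) as [c [Hc Hcd]].
set (psi := fun t : R => fst (c * F (z + RtoC t * w))%C + H t).
set (psi' := fun t : R => fst (c * (F' (z + RtoC t * w) * w))%C + H' t).
assert (Hd : forall t, 0 <= t <= 1 -> is_derive psi t (psi' t)).
{ intros t Ht. unfold psi, psi'. apply (@is_derive_plus R_AbsRing R_NormedModule).
  apply real_restrict. apply HF; auto. apply HH; auto. }
destruct (MVT_gen psi 0 1 psi') as [xi [Hxi E]].
- intros x Hx. rewrite Rmin_left, Rmax_right in Hx by lra. apply Hd; lra.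
- intros x Hx. rewrite Rmin_left, Rmax_right in Hx by lra.
  apply continuity_pt_filterlim. apply (@ex_derive_continuous R_AbsRing R_NormedModule). eexists. apply Hd; lra.
- rewrite Rmin_left, Rmax_right in Hxi by lra.
  assert (Hp : psi' xi <= 0).
  { unfold psi'. specialize (Hb xi Hxi).
    assert (fst (c * (F' (z + RtoC xi * w) * w))%C <= Cmod (F' (z + RtoC xi * w) * w)%C).
    { eapply Rle_trans. apply Rle_abs. eapply Rle_trans. apply Cmod_re_le.
      rewrite Cmod_mult. pose proof (Cmod_ge_0 (F' (z + RtoC xi * w) * w)%C).
      pose proof (Cmod_ge_0 c). nra. }
    lra. }
  unfold psi in E.
  replace (z + RtoC 1 * w)%C with (z + w)%C in E by ring.
  replace (z + RtoC 0 * w)%C with z in E by ring.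
  assert (E2 : fst (c * F (z + w))%C - fst (c * F z)%C = Cmod (F (z + w) - F z)%C).
  { rewrite <- Hcd. simpl. ring. }
  nra.
Qed.


Fixpoint cprod (u : nat -> C) (N : nat) : C :=
  match N with O => RtoC 1 | S N' => (cprod u N' * u N')%C end.
Fixpoint rsum (a : nat -> R) (N : nat) : R :=
  match N with O => 0 | S N' => rsum a N' + a N' end.

Lemma rsum_sum_f (a : nat -> R) n : rsum a (S n) = sum_f_R0 a n.
Proof. induction n; simpl in *. ring. rewrite <- IHn. simpl. ring. Qed.

Lemma rsum_nonneg a : (forall n, 0 <= a n) -> forall N, 0 <= rsum a N.
Proof. intros H N; induction N; simpl. lra. specialize (H N). lra. Qed.

Lemma rsum_mono a : (forall n, 0 <= a n) -> forall N M, (N <= M)%nat -> rsum a N <= rsum a M.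
Proof. intros H N M HNM; induction HNM. lra. simpl. specialize (H m). lra. Qed.

Lemma series_facts (a : nat -> R) : ex_series a -> (forall n, 0 <= a n) ->
  exists L, (forall N, rsum a N <= L) /\
    (forall eps, 0 < eps -> exists N0, forall N, (N0 <= N)%nat -> L - rsum a N <= eps).
Proof.
intros [L HL] Hpos. apply is_series_Reals in HL.
exists L. split.
- intros N. destruct N. simpl.
  + assert (sum_f_R0 a 0 <= L).
    { apply (growing_ineq (sum_f_R0 a)). intros n. simpl. specialize (Hpos (S n)). lra. exact HL. }
    simpl in H. specialize (Hpos 0%nat). lra.
  + rewrite rsum_sum_f. apply (growing_ineq (sum_f_R0 a)). intros n. simpl. specialize (Hpos (S n)). lra. exact HL.
- intros eps Heps. destruct (HL eps Heps) as [N0 HN0]. exists (S N0). intros N HN.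
  destruct N. lia. rewrite rsum_sum_f. specialize (HN0 N ltac:(lia)). unfold Rdist in HN0.
  pose proof (Rle_abs (sum_f_R0 a N - L)). pose proof (Rabs_minus_sym (sum_f_R0 a N) L).
  pose proof (Rle_abs (L - sum_f_R0 a N)). lra.
Qed.

Lemma Cmod_sym (a b : C) : Cmod (a - b)%C = Cmod (b - a)%C.
Proof. rewrite <- Cmod_opp. f_equal. ring. Qed.

Definition Ccv (p : nat -> C) (L : C) : Prop :=
  forall eps, 0 < eps -> exists N0, forall N, (N0 <= N)%nat -> Cmod (p N - L)%C <= eps.

Lemma Ccv_filterlim (p : nat -> C) (L : C) : Ccv p L <-> filterlim p eventually (locally L).
Proof.
split.
- intros H. apply filterlim_locally. intros [eps Heps].
  destruct (H (eps/2)) as [N0 HN0]. lra. exists N0. intros N HN. specialize (HN0 N HN).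
  split; simpl.
  + change (Rabs (fst (p N) - fst L) < eps).
    pose proof (Cmod_re_le (p N - L)%C). simpl in H0.
    replace (fst (p N) - fst L) with (fst (p N) + - fst L) by ring. lra.
  + change (Rabs (snd (p N) - snd L) < eps).
    pose proof (Cmod_im_le (p N - L)%C). simpl in H0.
    replace (snd (p N) - snd L) with (snd (p N) + - snd L) by ring. lra.
- intros H eps Heps. rewrite filterlim_locally in H.
  destruct (H (mkposreal (eps/2) ltac:(lra))) as [N0 HN0]. exists N0. intros N HN.
  specialize (HN0 N HN). apply ball_Cmod in HN0. simpl in HN0. lra.
Qed.

Lemma Ccv_unique p L M : Ccv p L -> Ccv p M -> L = M.
Proof.
intros H1 H2. apply Ceq_minus. apply Cmod_eq_0.
apply Rle_antisym; [|apply Cmod_ge_0].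
apply Rnot_lt_le. intros Hlt.
destruct (H1 (Cmod (L - M)%C / 4)) as [N1 HN1]. lra.
destruct (H2 (Cmod (L - M)%C / 4)) as [N2 HN2]. lra.
specialize (HN1 (N1 + N2)%nat ltac:(lia)). specialize (HN2 (N1 + N2)%nat ltac:(lia)).
pose proof (Cmod_triangle (L - p (N1 + N2)%nat)%C (p (N1 + N2)%nat - M)%C).
replace (L - p (N1 + N2)%nat + (p (N1 + N2)%nat - M))%C with (L - M)%C in H by ring.
rewrite (Cmod_sym (p _) L) in HN1.
lra.
Qed.

Lemma Ccv_le p L y c : Ccv p L -> (exists N0, forall N, (N0 <= N)%nat -> Cmod (p N - y)%C <= c) ->
  Cmod (L - y)%C <= c.
Proof.
intros H [N0 HN0]. apply Rnot_lt_le. intros Hlt.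
destruct (H ((Cmod (L - y)%C - c)/2)) as [N1 HN1]. lra.
specialize (HN1 (N0 + N1)%nat ltac:(lia)). specialize (HN0 (N0 + N1)%nat ltac:(lia)).
pose proof (Cmod_triangle (L - p (N0 + N1)%nat)%C (p (N0 + N1)%nat - y)%C).
replace (L - p (N0 + N1)%nat + (p (N0 + N1)%nat - y))%C with (L - y)%C in H0 by ring.
rewrite (Cmod_sym (p _) L) in HN1.
lra.
Qed.

Lemma Ccv_minus p q L M : Ccv p L -> Ccv q M -> Ccv (fun n => p n - q n)%C (L - M)%C.
Proof.
intros H1 H2 eps Heps.
destruct (H1 (eps/2)) as [N1 HN1]. lra. destruct (H2 (eps/2)) as [N2 HN2]. lra.
exists (N1 + N2)%nat. intros N HN. specialize (HN1 N ltac:(lia)). specialize (HN2 N ltac:(lia)).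
replace (p N - q N - (L - M))%C with ((p N - L) + - (q N - M))%C by ring.
eapply Rle_trans. apply Cmod_triangle. rewrite Cmod_opp. lra.
Qed.

Lemma Ccv_mult p q L M : Ccv p L -> Ccv q M -> Ccv (fun n => p n * q n)%C (L * M)%C.
Proof.
intros H1 H2 eps Heps.
set (e := Rmin 1 (eps / (Cmod L + Cmod M + 2))).
assert (HLM : 0 < Cmod L + Cmod M + 2) by (pose proof (Cmod_ge_0 L); pose proof (Cmod_ge_0 M); lra).
assert (He : 0 < e) by (apply Rmin_pos; [lra| apply Rdiv_lt_0_compat; lra]).
destruct (H1 e He) as [N1 HN1]. destruct (H2 e He) as [N2 HN2].
exists (N1 + N2)%nat. intros N HN. specialize (HN1 N ltac:(lia)). specialize (HN2 N ltac:(lia)).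
replace (p N * q N - L * M)%C with (p N * (q N - M) + M * (p N - L))%C by ring.
eapply Rle_trans. apply Cmod_triangle. rewrite !Cmod_mult.
assert (Hp : Cmod (p N) <= Cmod L + 1).
{ pose proof (Cmod_triangle (p N - L)%C L). replace (p N - L + L)%C with (p N) in H by ring.
  assert (e <= 1) by apply Rmin_l. lra. }
assert (Hee : e * (Cmod L + Cmod M + 2) <= eps).
{ assert (e <= eps / (Cmod L + Cmod M + 2)) by apply Rmin_r.
  apply Rmult_le_compat_r with (r := Cmod L + Cmod M + 2) in H; [|lra].
  unfold Rdiv in H. rewrite Rmult_assoc, Rinv_l, Rmult_1_r in H by lra. lra. }
pose proof (Cmod_ge_0 (p N)). pose proof (Cmod_ge_0 M). pose proof (Cmod_ge_0 (q N - M)%C).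
pose proof (Cmod_ge_0 (p N - L)%C).
assert (Cmod (p N) * Cmod (q N - M)%C <= (Cmod L + 1) * e) by (apply Rmult_le_compat; auto).
assert (Cmod M * Cmod (p N - L)%C <= Cmod M * e) by (apply Rmult_le_compat_l; auto).
nra.
Qed.

Lemma cauchy_re (x : nat -> C) (t : nat -> R) (f : C -> R) :
  (forall c, Rabs (f c) <= Cmod c) -> (forall a b, f (a - b)%C = f a - f b) ->
  (forall N M, (N <= M)%nat -> Cmod (x M - x N)%C <= t N) ->
  (forall eps, 0 < eps -> exists N0, forall N, (N0 <= N)%nat -> t N <= eps) ->
  Cauchy_crit (fun n => f (x n)).
Proof.
intros Hf Hfm Hx Ht eps Heps. destruct (Ht (eps/4)) as [N0 HN0]. lra. exists N0. intros n m Hn Hm.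
unfold Rdist.
assert (forall n, (n >= N0)%nat -> Rabs (f (x n) - f (x N0)) <= eps/4).
{ intros k Hk. specialize (Hx N0 k Hk). pose proof (Hf (x k - x N0)%C). rewrite Hfm in H.
  specialize (HN0 N0 (le_n _)). lra. }
pose proof (H n Hn). pose proof (H m Hm).
replace (f (x n) - f (x m)) with ((f (x n) - f (x N0)) - (f (x m) - f (x N0))) by ring.
eapply Rle_lt_trans. apply Rabs_triang. rewrite Rabs_Ropp. lra.
Qed.

Lemma cauchy_lim (x : nat -> C) (t : nat -> R) :
  (forall N M, (N <= M)%nat -> Cmod (x M - x N)%C <= t N) ->
  (forall eps, 0 < eps -> exists N0, forall N, (N0 <= N)%nat -> t N <= eps) ->
  exists L, Ccv x L.
Proof.
intros Hx Ht.
destruct (Rcomplete.R_complete _ (cauchy_re x t fst Cmod_re_le ltac:(intros; simpl; ring) Hx Ht)) as [lr Hr].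
destruct (Rcomplete.R_complete _ (cauchy_re x t snd Cmod_im_le ltac:(intros; simpl; ring) Hx Ht)) as [li Hi].
exists (lr, li). intros eps Heps.
destruct (Hr (eps/2)) as [N1 HN1]. lra. destruct (Hi (eps/2)) as [N2 HN2]. lra.
exists (N1 + N2)%nat. intros N HN. specialize (HN1 N ltac:(lia)). specialize (HN2 N ltac:(lia)).
unfold Rdist in *. eapply Rle_trans. apply Cmod_le_sum. simpl.
replace (fst (x N) + - lr) with (fst (x N) - lr) by ring.
replace (snd (x N) + - li) with (snd (x N) - li) by ring. lra.
Qed.


Fixpoint dprod (u du : nat -> C) (N : nat) : C :=
  match N with O => RtoC 0 | S N' => (dprod u du N' * u N' + cprod u N' * du N')%C end.

Lemma one_plus_le_exp x : 1 + x <= exp x.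
Proof. apply exp_ineq1_le. Qed.

Lemma exp_mono x y : x <= y -> exp x <= exp y.
Proof. intros [H|H]. left; apply exp_increasing; auto. subst; lra. Qed.

Lemma Cmod_u_le (v : C) (a : R) : Cmod (v - RtoC 1)%C <= a -> Cmod v <= 1 + a.
Proof.
intros H. pose proof (Cmod_triangle (v - RtoC 1)%C (RtoC 1)).
replace (v - RtoC 1 + RtoC 1)%C with v in H0 by ring. rewrite Cmod_1 in H0. lra.
Qed.

Lemma prod_bound (u : nat -> C) (a : nat -> R) :
  (forall k, Cmod (u k - RtoC 1)%C <= a k) -> forall N, Cmod (cprod u N) <= exp (rsum a N).
Proof.
intros H N. induction N; simpl.
- rewrite Cmod_1, exp_0. lra.
- rewrite Cmod_mult, exp_plus. pose proof (Cmod_u_le _ _ (H N)).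
  pose proof (one_plus_le_exp (a N)). pose proof (Cmod_ge_0 (cprod u N)).
  pose proof (Cmod_ge_0 (u N)).
  apply Rmult_le_compat; auto. lra.
Qed.

Lemma cprod_cauchy (u : nat -> C) (a : nat -> R) (E : R) :
  (forall k, Cmod (u k - RtoC 1)%C <= a k) -> (forall N, Cmod (cprod u N) <= E) ->
  forall N M, (N <= M)%nat -> Cmod (cprod u M - cprod u N)%C <= E * (rsum a M - rsum a N).
Proof.
intros H HE N M HNM. induction HNM.
- replace (cprod u N - cprod u N)%C with (RtoC 0) by ring. rewrite Cmod_0. lra.
- simpl. replace (cprod u m * u m - cprod u N)%C with ((cprod u m - cprod u N) + cprod u m * (u m - RtoC 1))%C by ring.
  eapply Rle_trans. apply Cmod_triangle. rewrite Cmod_mult.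
  pose proof (H m). pose proof (HE m). pose proof (Cmod_ge_0 (cprod u m)). pose proof (Cmod_ge_0 (u m - RtoC 1)%C).
  assert (Cmod (cprod u m) * Cmod (u m - RtoC 1)%C <= E * a m) by (apply Rmult_le_compat; auto).
  lra.
Qed.

Lemma prod_conv (u : nat -> C) (a : nat -> R) :
  (forall k, Cmod (u k - RtoC 1)%C <= a k) -> ex_series a -> exists L, Ccv (cprod u) L.
Proof.
intros H Ha.
assert (Hpos : forall n, 0 <= a n) by (intros n; eapply Rle_trans; [apply Cmod_ge_0|apply H]).
destruct (series_facts a Ha Hpos) as [A [HA HtA]].
assert (HE : forall N, Cmod (cprod u N) <= exp A).
{ intros N. eapply Rle_trans. apply (prod_bound u a H). apply exp_mono. auto. }
apply (cauchy_lim _ (fun N => exp A * (A - rsum a N))).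
- intros N M HNM. eapply Rle_trans. apply (cprod_cauchy u a (exp A) H HE N M HNM).
  apply Rmult_le_compat_l. left; apply exp_pos. specialize (HA M). lra.
- intros eps Heps. destruct (HtA (eps / exp A)) as [N0 HN0].
  { apply Rdiv_lt_0_compat; auto. apply exp_pos. }
  exists N0. intros N HN. specialize (HN0 N HN).
  apply Rmult_le_compat_l with (r := exp A) in HN0; [|left; apply exp_pos].
  replace (exp A * (eps / exp A)) with eps in HN0 by (field; apply Rgt_not_eq, exp_pos). exact HN0.
Qed.

Lemma dprod_deriv (u du : nat -> C -> C) (z : C) :
  (forall n, CD (u n) z (du n z)) -> forall N,
  CD (fun y => cprod (fun k => u k y) N) z (dprod (fun k => u k z) (fun k => du k z) N).
Proof.
intros H N. induction N.
- exact (CD_const (RtoC 1) z).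
- simpl. exact (CD_mult _ _ z _ _ IHN (H N)).
Qed.

Lemma dprod_bound (u du : nat -> C) (a b : nat -> R) (E : R) :
  (forall k, Cmod (u k - RtoC 1)%C <= a k) -> (forall k, Cmod (du k) <= b k) ->
  (forall n, 0 <= b n) ->
  (forall N, Cmod (cprod u N) <= E) ->
  forall N, Cmod (dprod u du N) <= exp (rsum a N) * E * rsum b N.
Proof.
intros Ha Hb Hbp HE N.
assert (Hap : forall n, 0 <= a n) by (intros n; eapply Rle_trans; [apply Cmod_ge_0|apply Ha]).
assert (HE0 : 0 <= E) by (eapply Rle_trans; [apply Cmod_ge_0| apply (HE O)]).
induction N; simpl.
- rewrite Cmod_0. lra.
- eapply Rle_trans. apply Cmod_triangle. rewrite !Cmod_mult.
  pose proof (Cmod_u_le _ _ (Ha N)). pose proof (Hb N). pose proof (HE N).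
  pose proof (one_plus_le_exp (a N)).
  pose proof (Cmod_ge_0 (dprod u du N)). pose proof (Cmod_ge_0 (u N)). pose proof (Cmod_ge_0 (du N)).
  pose proof (Cmod_ge_0 (cprod u N)).
  pose proof (rsum_nonneg a Hap N). pose proof (rsum_nonneg b Hbp N).
  rewrite exp_plus.
  assert (X1 : Cmod (dprod u du N) * Cmod (u N) <= (exp (rsum a N) * E * rsum b N) * exp (a N)).
  { apply Rmult_le_compat; auto. lra. }
  assert (X2 : Cmod (cprod u N) * Cmod (du N) <= E * b N) by (apply Rmult_le_compat; auto).
  assert (X3 : 1 <= exp (rsum a N) * exp (a N)).
  { rewrite <- exp_plus, <- exp_0. apply exp_mono. specialize (Hap N). lra. }
  assert (X4 : E * b N <= exp (rsum a N) * exp (a N) * E * b N).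
  { assert (0 <= E * b N) by (apply Rmult_le_pos; auto). nra. }
  nra.
Qed.

Lemma dprod_cauchy (u du : nat -> C) (a b : nat -> R) (E K : R) :
  (forall k, Cmod (u k - RtoC 1)%C <= a k) -> (forall k, Cmod (du k) <= b k) ->
  (forall N, Cmod (cprod u N) <= E) -> (forall N, Cmod (dprod u du N) <= K) ->
  forall N M, (N <= M)%nat ->
  Cmod (dprod u du M - dprod u du N)%C <= K * (rsum a M - rsum a N) + E * (rsum b M - rsum b N).
Proof.
intros Ha Hb HE HK N M HNM. induction HNM.
- replace (dprod u du N - dprod u du N)%C with (RtoC 0) by ring. rewrite Cmod_0. lra.
- simpl.
  replace (dprod u du m * u m + cprod u m * du m - dprod u du N)%C
    with ((dprod u du m - dprod u du N) + (dprod u du m * (u m - RtoC 1) + cprod u m * du m))%C by ring.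
  eapply Rle_trans. apply Cmod_triangle.
  assert (Cmod (dprod u du m * (u m - RtoC 1) + cprod u m * du m)%C <= K * a m + E * b m).
  { eapply Rle_trans. apply Cmod_triangle. rewrite !Cmod_mult.
    pose proof (Ha m). pose proof (Hb m). pose proof (HE m). pose proof (HK m).
    pose proof (Cmod_ge_0 (dprod u du m)). pose proof (Cmod_ge_0 (u m - RtoC 1)%C).
    pose proof (Cmod_ge_0 (cprod u m)). pose proof (Cmod_ge_0 (du m)).
    assert (Cmod (dprod u du m) * Cmod (u m - RtoC 1)%C <= K * a m) by (apply Rmult_le_compat; auto).
    assert (Cmod (cprod u m) * Cmod (du m) <= E * b m) by (apply Rmult_le_compat; auto).
    lra. }
  lra.
Qed.

Lemma is_derive_lin_R (c t : R) : is_derive (fun s : R => c * s) t c.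
Proof. apply is_derive_Reals. intros eps Heps. exists (mkposreal 1 Rlt_0_1). intros h Hh _.
replace ((c * (t + h) - c * t) / h - c) with 0 by (field; auto). rewrite Rabs_R0. lra. Qed.

Lemma GL (u du : nat -> C -> C) (a b : nat -> R) (z0 : C) (r : R) (P : C -> C) :
  0 < r ->
  (forall n z, Cmod (z - z0)%C < r -> CD (u n) z (du n z)) ->
  (forall n z, Cmod (z - z0)%C < r -> Cmod (u n z - RtoC 1)%C <= a n) ->
  (forall n z, Cmod (z - z0)%C < r -> Cmod (du n z) <= b n) ->
  ex_series a -> ex_series b ->
  (forall z, Cmod (z - z0)%C < r -> Ccv (cprod (fun k => u k z)) (P z)) ->
  exists l, CD P z0 l.
Proof.
intros Hr Hd Ha Hb Hsa Hsb HP.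
assert (Hz0 : Cmod (z0 - z0)%C < r) by (replace (z0 - z0)%C with (RtoC 0) by ring; rewrite Cmod_0; lra).
assert (Hap : forall n, 0 <= a n) by (intros n; eapply Rle_trans; [apply Cmod_ge_0|apply (Ha n z0 Hz0)]).
assert (Hbp : forall n, 0 <= b n) by (intros n; eapply Rle_trans; [apply Cmod_ge_0|apply (Hb n z0 Hz0)]).
destruct (series_facts a Hsa Hap) as [A [HA HtA]].
destruct (series_facts b Hsb Hbp) as [B [HB HtB]].
set (E := exp A).
assert (HE0 : 0 < E) by apply exp_pos.
assert (HEa : forall N, exp (rsum a N) <= E) by (intros; apply exp_mono; auto).
assert (HB0 : 0 <= B) by (eapply Rle_trans; [apply (rsum_nonneg b Hbp O)| apply HB]).
set (K := E * E * B).
assert (HK0 : 0 <= K) by (unfold K; apply Rmult_le_pos; [nra|auto]).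
set (Pn := fun (N : nat) (y : C) => cprod (fun k => u k y) N).
set (Dn := fun (N : nat) (y : C) => dprod (fun k => u k y) (fun k => du k y) N).
assert (HPb : forall z N, Cmod (z - z0)%C < r -> Cmod (Pn N z) <= E).
{ intros z N Hz. eapply Rle_trans. apply (prod_bound _ a (fun k => Ha k z Hz)). auto. }
assert (HDb : forall z N, Cmod (z - z0)%C < r -> Cmod (Dn N z) <= K).
{ intros z N Hz. eapply Rle_trans. apply (dprod_bound _ _ a b E (fun k => Ha k z Hz) (fun k => Hb k z Hz) Hbp (fun N => HPb z N Hz)).
  unfold K. pose proof (rsum_nonneg b Hbp N). pose proof (HB N). pose proof (HEa N).
  pose proof (exp_pos (rsum a N)). 
  apply Rmult_le_compat; try nra. }
set (T := fun N => K * (A - rsum a N) + E * (B - rsum b N)).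
assert (HT : forall eps, 0 < eps -> exists N0, forall N, (N0 <= N)%nat -> T N <= eps).
{ intros eps Heps.
  destruct (HtA (eps / (2 * (K + 1)))) as [N1 HN1]. apply Rdiv_lt_0_compat; lra.
  destruct (HtB (eps / (2 * (E + 1)))) as [N2 HN2]. apply Rdiv_lt_0_compat; lra.
  exists (N1 + N2)%nat. intros N HN. specialize (HN1 N ltac:(lia)). specialize (HN2 N ltac:(lia)).
  unfold T.
  assert (K * (A - rsum a N) <= (K + 1) * (eps / (2 * (K + 1)))).
  { apply Rmult_le_compat; try lra. specialize (HA N). lra. }
  assert (E * (B - rsum b N) <= (E + 1) * (eps / (2 * (E + 1)))).
  { apply Rmult_le_compat; try lra. specialize (HB N). lra. }
  replace ((K + 1) * (eps / (2 * (K + 1)))) with (eps / 2) in H by (field; lra).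
  replace ((E + 1) * (eps / (2 * (E + 1)))) with (eps / 2) in H0 by (field; lra).
  lra. }
assert (HDc : forall z N M, Cmod (z - z0)%C < r -> (N <= M)%nat -> Cmod (Dn M z - Dn N z)%C <= T N).
{ intros z N M Hz HNM. unfold Dn.
  eapply Rle_trans. apply (dprod_cauchy _ _ a b E K (fun k => Ha k z Hz) (fun k => Hb k z Hz) (fun N => HPb z N Hz) (fun N => HDb z N Hz) N M HNM).
  unfold T. pose proof (HA M). pose proof (HB M).
  assert (K * (rsum a M - rsum a N) <= K * (A - rsum a N)) by (apply Rmult_le_compat_l; lra).
  assert (E * (rsum b M - rsum b N) <= E * (B - rsum b N)) by (apply Rmult_le_compat_l; lra).
  lra. }
destruct (cauchy_lim (fun N => Dn N z0) T (fun N M HNM => HDc z0 N M Hz0 HNM) HT) as [Q HQ].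
exists Q.
assert (C1 : forall N, Cmod (Q - Dn N z0)%C <= T N).
{ intros N. apply (Ccv_le _ _ _ _ HQ). exists N. intros M HM. apply HDc; auto. }
assert (HDer : forall N z, Cmod (z - z0)%C < r -> CD (Pn N) z (Dn N z)).
{ intros N z Hz. apply (dprod_deriv u du z (fun n => Hd n z Hz)). }
assert (C2 : forall N h, Cmod h < r ->
   Cmod ((P (z0 + h) - P z0) - (Pn N (z0 + h) - Pn N z0))%C <= T N * Cmod h).
{ intros N h Hh.
  assert (Hzh : Cmod (z0 + h - z0)%C < r) by (replace (z0 + h - z0)%C with h by ring; auto).
  apply (Ccv_le (fun M => Pn M (z0 + h) - Pn M z0)%C).
  { apply Ccv_minus. apply HP; auto. apply HP; auto. }
  exists N. intros M HM.
  assert (Hseg := seg_bound (fun y => Pn M y - Pn N y)%C (fun y => Dn M y - Dn N y)%C z0 h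
     (fun t => - (T N * Cmod h) * t) (fun t => - (T N * Cmod h))).
  simpl in Hseg.
  replace (Pn M (z0 + h) - Pn M z0 - (Pn N (z0 + h) - Pn N z0))%C
    with (Pn M (z0 + h) - Pn N (z0 + h) - (Pn M z0 - Pn N z0))%C by ring.
  replace (T N * Cmod h) with (- (T N * Cmod h) * 0 - - (T N * Cmod h) * 1) by ring.
  apply Hseg.
  - intros t Ht. apply CD_minus; apply HDer.
    replace (z0 + RtoC t * h - z0)%C with (RtoC t * h)%C by ring. rewrite Cmod_mult, Cmod_R, Rabs_right by lra.
    pose proof (Cmod_ge_0 h). nra.
    replace (z0 + RtoC t * h - z0)%C with (RtoC t * h)%C by ring. rewrite Cmod_mult, Cmod_R, Rabs_right by lra.
    pose proof (Cmod_ge_0 h). nra.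
  - intros t Ht. apply is_derive_lin_R.
  - intros t Ht. rewrite Cmod_mult. rewrite Ropp_involutive.
    apply Rmult_le_compat_r. apply Cmod_ge_0. apply HDc; auto.
    replace (z0 + RtoC t * h - z0)%C with (RtoC t * h)%C by ring. rewrite Cmod_mult, Cmod_R, Rabs_right by lra.
    pose proof (Cmod_ge_0 h). nra. }
apply Cderiv_iff. intros eps Heps.
destruct (HT (eps / 3)) as [N HN]. lra. specialize (HN N (le_n _)).
pose proof (HDer N z0 Hz0) as HdN. rewrite Cderiv_iff in HdN.
destruct (HdN (eps / 3)) as [d [Hd0 Hd']]. lra.
exists (Rmin d r). split. apply Rmin_pos; auto.
intros h Hh.
assert (Hh1 : Cmod h < d) by (eapply Rlt_le_trans; [exact Hh|apply Rmin_l]).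
assert (Hh2 : Cmod h < r) by (eapply Rlt_le_trans; [exact Hh|apply Rmin_r]).
specialize (Hd' h Hh1). specialize (C2 N h Hh2). specialize (C1 N).
replace (P (z0 + h) - P z0 - Q * h)%C with
  (((P (z0 + h) - P z0) - (Pn N (z0 + h) - Pn N z0)) + (Pn N (z0 + h) - Pn N z0 - Dn N z0 * h) + (- (Q - Dn N z0) * h))%C by ring.
eapply Rle_trans. apply Cmod_triangle. eapply Rle_trans. apply Rplus_le_compat_r. apply Cmod_triangle.
rewrite Cmod_mult, Cmod_opp.
pose proof (Cmod_ge_0 h). 
assert (Cmod (Q - Dn N z0)%C * Cmod h <= T N * Cmod h) by (apply Rmult_le_compat_r; auto).
assert (T N * Cmod h <= eps / 3 * Cmod h) by (apply Rmult_le_compat_r; auto).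
lra.
Qed.


Lemma ln_le_sub1 y : 0 < y -> ln y <= y - 1.
Proof. intros Hy. pose proof (exp_ineq1_le (ln y)). rewrite exp_ln in H by auto. lra. Qed.

Lemma ln_mul_exp_bound (x s e : R) : 1 <= x -> 0 < e ->
  ln x * exp (- s * ln x) <= exp (- (s - e) * ln x) / e.
Proof.
intros Hx He.
assert (Hl : 0 <= ln x) by (rewrite <- ln_1; apply ln_le; lra).
assert (H1 : e * ln x <= exp (e * ln x)) by (pose proof (exp_ineq1_le (e * ln x)); lra).
replace (exp (- (s - e) * ln x)) with (exp (e * ln x) * exp (- s * ln x)) by (rewrite <- exp_plus; f_equal; ring).
pose proof (exp_pos (- s * ln x)).
apply Rmult_le_reg_l with e; auto. unfold Rdiv.
replace (e * (exp (e * ln x) * exp (- s * ln x) * / e)) with (exp (e * ln x) * exp (- s * ln x)) by (field; lra).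
nra.
Qed.

Lemma ex_series_bounded (c : nat -> R) (M : R) :
  (forall n, 0 <= c n) -> (forall N, rsum c N <= M) -> ex_series c.
Proof.
intros Hc HM.
destruct (ex_finite_lim_seq_incr (sum_f_R0 c) M) as [l Hl].
- intros n. simpl. specialize (Hc (S n)). lra.
- intros n. rewrite <- rsum_sum_f. auto.
- exists l. apply is_series_Reals. apply is_lim_seq_Reals in Hl. exact Hl.
Qed.

Lemma mono_deriv (G G' : R -> R) (u v : R) : u <= v ->
  (forall x, u <= x <= v -> is_derive G x (G' x)) -> (forall x, u <= x <= v -> G' x <= 0) ->
  G v <= G u.
Proof.
intros Huv Hd Hn. destruct (Req_dec u v) as [->|Hne]. lra.
destruct (MVT_gen G u v G') as [c [Hc E]].
- intros x Hx. rewrite Rmin_left, Rmax_right in Hx by lra. apply Hd; lra.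
- intros x Hx. rewrite Rmin_left, Rmax_right in Hx by lra.
  apply continuity_pt_filterlim. apply (@ex_derive_continuous R_AbsRing R_NormedModule). eexists. apply Hd; lra.
- rewrite Rmin_left, Rmax_right in Hc by lra. specialize (Hn c Hc). nra.
Qed.

Lemma tele_series (x y : nat -> R) (G : R -> R) :
  (forall n, 0 <= x n) -> (forall n, x n <= y n) -> (forall n, y n <= x (S n)) ->
  (forall u v, 0 <= u -> u <= v -> G v <= G u) -> (forall u, 0 <= u -> 0 <= G u) ->
  ex_series (fun n => G (x n) - G (y n)).
Proof.
intros Hx Hxy Hyx Hmono Hpos.
apply (ex_series_bounded _ (G (x O))).
- intros n. specialize (Hmono (x n) (y n) (Hx n) (Hxy n)). lra.
- assert (forall N, rsum (fun n => G (x n) - G (y n)) N <= G (x O) - G (x N)).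
  { intros N. induction N; simpl. lra.
    assert (G (x (S N)) <= G (y N)). { apply Hmono. pose proof (Hx N); pose proof (Hxy N); lra. auto. }
    lra. }
  intros N. specialize (H N). specialize (Hpos (x N) (Hx N)). lra.
Qed.


Lemma Cmod_rpow x s : Cmod (rpow_neg x s) = exp (- fst s * ln x).
Proof. unfold rpow_neg. rewrite Cmod_cexp. f_equal. simpl. ring. Qed.

Lemma Cmod_rpow_le x s sig : 1 <= x -> sig <= fst s -> Cmod (rpow_neg x s) <= exp (- sig * ln x).
Proof.
intros Hx Hs. rewrite Cmod_rpow. apply exp_mono.
assert (0 <= ln x) by (rewrite <- ln_1; apply ln_le; lra). nra.
Qed.

Lemma CD_rpow x s : CD (fun z => rpow_neg x z) s (- RtoC (ln x) * rpow_neg x s)%C.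
Proof.
apply (CD_ext (fun y => cexp (- RtoC (ln x) * y))%C).
{ intros y. unfold rpow_neg. f_equal. ring. }
pose proof (CD_cexp_lin (- RtoC (ln x))%C s).
replace (rpow_neg x s) with (cexp (- RtoC (ln x) * s))%C by (unfold rpow_neg; f_equal; ring).
exact H.
Qed.

Lemma diff_bound1 (al be sig K : R) (s : C) :
  1 <= al -> al <= be -> 0 < sig -> sig <= fst s -> Cmod s <= K ->
  Cmod (rpow_neg be s - rpow_neg al s)%C <= K / sig * (exp (- sig * ln al) - exp (- sig * ln be)).
Proof.
intros Hal Hab Hsig Hs HK.
assert (Hla : 0 <= ln al) by (rewrite <- ln_1; apply ln_le; lra).
assert (Hlab : ln al <= ln be) by (apply ln_le; lra).
set (W := ln be - ln al).
assert (HW : 0 <= W) by (unfold W; lra).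
pose proof (seg_bound (fun z => cexp (- s * z))%C (fun z => - s * cexp (- s * z))%C (RtoC (ln al)) (RtoC W)
  (fun t => K / sig * exp (- sig * (ln al + t * W))) (fun t => - (K * W) * exp (- sig * (ln al + t * W)))) as Hseg.
replace (rpow_neg be s) with (cexp (- s * (RtoC (ln al) + RtoC W)))%C.
2:{ unfold rpow_neg. f_equal. unfold W. apply injective_projections; simpl; ring. }
replace (rpow_neg al s) with (cexp (- s * RtoC (ln al)))%C.
2:{ unfold rpow_neg. f_equal. }
replace (K / sig * (exp (- sig * ln al) - exp (- sig * ln be))) with
  (K / sig * exp (- sig * (ln al + 0 * W)) - K / sig * exp (- sig * (ln al + 1 * W))).
2:{ unfold W. replace (ln al + 0 * (ln be - ln al)) with (ln al) by ring.
    replace (ln al + 1 * (ln be - ln al)) with (ln be) by ring. ring. }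
apply Hseg.
- intros t Ht. apply CD_cexp_lin.
- intros t Ht. auto_derive. auto. field. lra.
- intros t Ht.
  rewrite !Cmod_mult, Cmod_opp, Cmod_cexp, Cmod_R, Rabs_right by lra.
  replace (fst (- s * (RtoC (ln al) + RtoC t * RtoC W)))%C with (- fst s * (ln al + t * W)) by (simpl; ring).
  assert (Hu : 0 <= ln al + t * W) by nra.
  assert (exp (- fst s * (ln al + t * W)) <= exp (- sig * (ln al + t * W))) by (apply exp_mono; nra).
  pose proof (exp_pos (- fst s * (ln al + t * W))). pose proof (Cmod_ge_0 s).
  replace (- (- (K * W) * exp (- sig * (ln al + t * W)))) with (K * exp (- sig * (ln al + t * W)) * W) by ring.
  apply Rmult_le_compat_r; auto. apply Rmult_le_compat; auto. lra.
Qed.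

Definition G1 (sig K u : R) : R := exp (- sig * u) * (1 / sig + K * u / sig + K / (sig * sig)).

Lemma diff_bound2 (al be sig K : R) (s : C) :
  1 <= al -> al <= be -> 0 < sig -> sig <= fst s -> Cmod s <= K ->
  Cmod (RtoC (ln be) * rpow_neg be s - RtoC (ln al) * rpow_neg al s)%C <= G1 sig K (ln al) - G1 sig K (ln be).
Proof.
intros Hal Hab Hsig Hs HK.
assert (Hla : 0 <= ln al) by (rewrite <- ln_1; apply ln_le; lra).
assert (Hlab : ln al <= ln be) by (apply ln_le; lra).
set (W := ln be - ln al).
assert (HW : 0 <= W) by (unfold W; lra).
pose proof (seg_bound (fun z => z * cexp (- s * z))%C (fun z => RtoC 1 * cexp (- s * z) + z * (- s * cexp (- s * z)))%C (RtoC (ln al)) (RtoC W)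
  (fun t => G1 sig K (ln al + t * W)) (fun t => - W * (exp (- sig * (ln al + t * W)) * (1 + K * (ln al + t * W))))) as Hseg.
replace (RtoC (ln be) * rpow_neg be s)%C with ((RtoC (ln al) + RtoC W) * cexp (- s * (RtoC (ln al) + RtoC W)))%C.
2:{ unfold rpow_neg. f_equal. unfold W. apply injective_projections; simpl; ring.
    f_equal. unfold W. apply injective_projections; simpl; ring. }
replace (rpow_neg al s) with (cexp (- s * RtoC (ln al)))%C.
2:{ unfold rpow_neg. f_equal. }
replace (G1 sig K (ln al) - G1 sig K (ln be)) with
  (G1 sig K (ln al + 0 * W) - G1 sig K (ln al + 1 * W)).
2:{ unfold W. replace (ln al + 0 * (ln be - ln al)) with (ln al) by ring.
    replace (ln al + 1 * (ln be - ln al)) with (ln be) by ring. ring. }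
apply Hseg.
- intros t Ht. apply (CD_mult (fun z => z) (fun z => cexp (- s * z))%C). apply CD_id. apply CD_cexp_lin.
- intros t Ht. unfold G1. auto_derive. auto. field. lra.
- intros t Ht.
  set (u := ln al + t * W).
  assert (Hu : 0 <= u) by (unfold u; nra).
  replace (RtoC (ln al) + RtoC t * RtoC W)%C with (RtoC u) by (unfold u; apply injective_projections; simpl; ring).
  replace ((RtoC 1 * cexp (- s * RtoC u) + RtoC u * (- s * cexp (- s * RtoC u))) * RtoC W)%C
    with (cexp (- s * RtoC u) * (RtoC 1 + RtoC u * - s) * RtoC W)%C by ring.
  rewrite !Cmod_mult, Cmod_cexp, (Cmod_R W), Rabs_right by lra.
  replace (fst (- s * RtoC u))%C with (- fst s * u) by (simpl; ring).
  assert (E1 : exp (- fst s * u) <= exp (- sig * u)) by (apply exp_mono; nra).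
  assert (E2 : Cmod (RtoC 1 + RtoC u * - s)%C <= 1 + K * u).
  { eapply Rle_trans. apply Cmod_triangle. rewrite Cmod_1, Cmod_mult, Cmod_opp, Cmod_R, Rabs_right by lra.
    pose proof (Cmod_ge_0 s). nra. }
  pose proof (exp_pos (- fst s * u)). pose proof (Cmod_ge_0 (RtoC 1 + RtoC u * - s)%C).
  replace (- (- W * (exp (- sig * u) * (1 + K * u)))) with (exp (- sig * u) * (1 + K * u) * W) by ring.
  apply Rmult_le_compat_r; auto. apply Rmult_le_compat; auto. lra.
Qed.

Lemma G1_nonneg sig K u : 0 < sig -> 0 <= K -> 0 <= u -> 0 <= G1 sig K u.
Proof.
intros. unfold G1. apply Rmult_le_pos. left; apply exp_pos.
assert (0 <= K * u / sig) by (apply Rdiv_le_0_compat; nra).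
assert (0 <= K / (sig * sig)) by (apply Rdiv_le_0_compat; nra).
assert (0 < 1 / sig) by (apply Rdiv_lt_0_compat; lra). lra.
Qed.

Lemma G1_mono sig K u v : 0 < sig -> 0 <= K -> 0 <= u -> u <= v -> G1 sig K v <= G1 sig K u.
Proof.
intros Hs HK Hu Huv.
apply (mono_deriv (G1 sig K) (fun x => - (exp (- sig * x) * (1 + K * x)))); auto.
- intros x Hx. unfold G1. auto_derive. auto. field. lra.
- intros x Hx. pose proof (exp_pos (- sig * x)). assert (0 <= 1 + K * x) by nra. nra.
Qed.

Lemma G0_mono sig u v : 0 < sig -> u <= v -> exp (- sig * v) <= exp (- sig * u).
Proof. intros. apply exp_mono. nra. Qed.


Lemma div_bound (a b : C) (A q : R) : Cmod a <= A -> 0 < q -> q <= Cmod b -> Cmod (a / b)%C <= A / q.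
Proof.
intros Ha Hq Hb. assert (Hb0 : b <> RtoC 0) by (intros E; rewrite E, Cmod_0 in Hb; lra).
rewrite Cmod_div by auto. unfold Rdiv. apply Rmult_le_compat; auto. apply Cmod_ge_0.
left; apply Rinv_0_lt_compat; lra. apply Rinv_le_contravar; auto.
Qed.

Lemma one_minus_bound (w : C) (q : R) : Cmod w <= q -> 1 - q <= Cmod (RtoC 1 - w)%C.
Proof.
intros H. pose proof (Cmod_triangle (RtoC 1 - w)%C w). replace (RtoC 1 - w + w)%C with (RtoC 1) in H0 by ring.
rewrite Cmod_1 in H0. lra.
Qed.

Section Fac.
Variables (a0 sig K : R) (s : C).
Hypothesis Ha0 : 1 < a0.
Hypothesis Hsig : 0 < sig.
Hypothesis Hs : sig <= fst s.
Hypothesis HK : Cmod s <= K.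
Let q := exp (- sig * ln a0).

Lemma q_lt1 : q < 1.
Proof. unfold q. rewrite <- exp_0. apply exp_increasing. assert (0 < ln a0) by (rewrite <- ln_1; apply ln_increasing; lra). nra. Qed.
Lemma q_pos : 0 < q.
Proof. apply exp_pos. Qed.

Lemma w_le (x : R) : a0 <= x -> Cmod (rpow_neg x s) <= exp (- sig * ln x).
Proof. intros Hx. apply Cmod_rpow_le; lra. Qed.

Lemma w_le_q (x : R) : a0 <= x -> Cmod (rpow_neg x s) <= q.
Proof. intros Hx. eapply Rle_trans. apply w_le; auto. unfold q. apply exp_mono.
 assert (ln a0 <= ln x) by (apply ln_le; lra). nra. Qed.

Lemma om_bound (x : R) : a0 <= x -> 1 - q <= Cmod (RtoC 1 - rpow_neg x s)%C.
Proof. intros Hx. apply one_minus_bound. apply w_le_q; auto. Qed.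

Lemma om_nz (x : R) : a0 <= x -> (RtoC 1 - rpow_neg x s)%C <> RtoC 0.
Proof. intros Hx E. pose proof (om_bound x Hx). rewrite E, Cmod_0 in H. pose proof q_lt1. lra. Qed.

Definition duE (x : R) (z : C) : C :=
  (- (RtoC 0 - - RtoC (ln x) * rpow_neg x z) / ((RtoC 1 - rpow_neg x z) * (RtoC 1 - rpow_neg x z)))%C.

Lemma uE_minus1 (x : R) : a0 <= x -> Cmod (euler_factor x s - RtoC 1)%C <= exp (- sig * ln x) / (1 - q).
Proof.
intros Hx. pose proof (om_nz x Hx). pose proof q_lt1.
unfold euler_factor.
replace (/ (1 - rpow_neg x s) - RtoC 1)%C with (rpow_neg x s / (RtoC 1 - rpow_neg x s))%C by (field; auto).
apply div_bound. apply w_le; auto. lra. apply om_bound; auto.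
Qed.

Lemma duE_bound (x : R) : a0 <= x -> Cmod (duE x s) <= ln x * exp (- sig * ln x) / ((1 - q) * (1 - q)).
Proof.
intros Hx. pose proof (om_nz x Hx). pose proof q_lt1.
unfold duE. apply div_bound.
- replace (- (RtoC 0 - - RtoC (ln x) * rpow_neg x s))%C with (- (RtoC (ln x) * rpow_neg x s))%C by ring.
  rewrite Cmod_opp, Cmod_mult, Cmod_R, Rabs_right.
  apply Rmult_le_compat_l. rewrite <- ln_1; apply ln_le; lra. apply w_le; auto.
  apply Rle_ge. rewrite <- ln_1; apply ln_le; lra.
- nra.
- rewrite Cmod_mult. pose proof (om_bound x Hx). apply Rmult_le_compat; lra.
Qed.

Lemma CD_E (x : R) : a0 <= x -> CD (euler_factor x) s (duE x s).
Proof.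
intros Hx. unfold duE, euler_factor.
apply (CD_Cinv_fun (fun z => RtoC 1 - rpow_neg x z)%C).
apply CD_minus. apply CD_const. apply CD_rpow. apply om_nz; auto.
Qed.

Definition gF (al be : R) (z : C) : C := ((RtoC 1 - rpow_neg be z) * euler_factor al z)%C.
Definition dgF (al be : R) (z : C) : C :=
  ((RtoC 0 - - RtoC (ln be) * rpow_neg be z) * euler_factor al z + (RtoC 1 - rpow_neg be z) * duE al z)%C.
Definition vF (al be : R) (z : C) : C := ((RtoC 1 - rpow_neg al z) * euler_factor be z)%C.

Lemma CD_g (al be : R) : a0 <= al -> CD (gF al be) s (dgF al be s).
Proof.
intros Hal. unfold gF, dgF.
apply (CD_mult (fun z => RtoC 1 - rpow_neg be z)%C (euler_factor al)).
apply CD_minus. apply CD_const. apply CD_rpow. apply CD_E; auto.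
Qed.

Definition D0 (al be : R) := K / sig * (exp (- sig * ln al) - exp (- sig * ln be)).
Definition D1 (al be : R) := G1 sig K (ln al) - G1 sig K (ln be).

Lemma g_minus1 (al be : R) : a0 <= al -> al <= be -> Cmod (gF al be s - RtoC 1)%C <= D0 al be / (1 - q).
Proof.
intros Hal Hab. pose proof (om_nz al Hal). pose proof q_lt1.
unfold gF, euler_factor.
replace ((RtoC 1 - rpow_neg be s) * / (1 - rpow_neg al s) - RtoC 1)%C
  with ((rpow_neg al s - rpow_neg be s) / (RtoC 1 - rpow_neg al s))%C by (field; auto).
apply div_bound; [|lra|apply om_bound; auto].
rewrite Cmod_sym. apply diff_bound1; lra.
Qed.

Lemma v_minus1 (al be : R) : a0 <= al -> al <= be -> Cmod (vF al be s - RtoC 1)%C <= D0 al be / (1 - q).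
Proof.
intros Hal Hab. pose proof (om_nz be ltac:(lra)). pose proof q_lt1.
unfold vF, euler_factor.
replace ((RtoC 1 - rpow_neg al s) * / (1 - rpow_neg be s) - RtoC 1)%C
  with ((rpow_neg be s - rpow_neg al s) / (RtoC 1 - rpow_neg be s))%C by (field; auto).
apply div_bound; [|lra|apply om_bound; lra].
apply diff_bound1; lra.
Qed.

Lemma dg_bound (al be : R) : a0 <= al -> al <= be ->
  Cmod (dgF al be s) <= D1 al be / (1 - q) + D0 al be * (1 / sig) / ((1 - q) * (1 - q)).
Proof.
intros Hal Hab. pose proof (om_nz al Hal). pose proof q_lt1.
unfold dgF, duE, euler_factor.
replace ((RtoC 0 - - RtoC (ln be) * rpow_neg be s) * / (1 - rpow_neg al s) +
   (RtoC 1 - rpow_neg be s) * (- (RtoC 0 - - RtoC (ln al) * rpow_neg al s) /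
     ((RtoC 1 - rpow_neg al s) * (RtoC 1 - rpow_neg al s))))%C
  with ((RtoC (ln be) * rpow_neg be s - RtoC (ln al) * rpow_neg al s) / (RtoC 1 - rpow_neg al s)
        + - ((rpow_neg al s - rpow_neg be s) * (RtoC (ln al) * rpow_neg al s)) /
          ((RtoC 1 - rpow_neg al s) * (RtoC 1 - rpow_neg al s)))%C by (field; auto).
eapply Rle_trans. apply Cmod_triangle. apply Rplus_le_compat.
- apply div_bound; [|lra|apply om_bound; auto]. apply diff_bound2; lra.
- apply div_bound.
  + rewrite Cmod_opp, Cmod_mult. rewrite Cmod_sym. apply Rmult_le_compat. apply Cmod_ge_0. apply Cmod_ge_0.
    apply diff_bound1; lra.
    rewrite Cmod_mult, Cmod_R, Rabs_right.
    2:{ apply Rle_ge. rewrite <- ln_1; apply ln_le; lra. }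
    eapply Rle_trans. apply Rmult_le_compat_l. rewrite <- ln_1; apply ln_le; lra. apply w_le; auto.
    eapply Rle_trans. apply ln_mul_exp_bound with (e := sig); lra.
    replace (- (sig - sig) * ln al) with 0 by ring. rewrite exp_0. lra.
  + nra.
  + rewrite Cmod_mult. pose proof (om_bound al Hal). apply Rmult_le_compat; lra.
Qed.

End Fac.


Definition climit (p : nat -> C) : C := epsilon (inhabits (RtoC 0)) (fun L => Ccv p L).
Lemma climit_spec p : (exists L, Ccv p L) -> Ccv p (climit p).
Proof. intros H. unfold climit. apply epsilon_spec. exact H. Qed.

Lemma ex_series_div (a : nat -> R) (c : R) : ex_series a -> ex_series (fun n => a n / c).
Proof.
intros H. apply (ex_series_ext (fun n => scal (/ c) (a n))).
{ intros n. unfold scal; simpl. unfold mult; simpl. unfold Rdiv. ring. }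
apply (@ex_series_scal R_AbsRing R_NormedModule). exact H.
Qed.

Lemma ex_series_plusR (a b : nat -> R) : ex_series a -> ex_series b -> ex_series (fun n => a n + b n).
Proof. intros. apply (@ex_series_plus R_AbsRing R_NormedModule); auto. Qed.

Lemma ex_series_dom (c d : nat -> R) : (forall n, 0 <= c n <= d n) -> ex_series d -> ex_series c.
Proof.
intros H Hd. apply (@ex_series_le R_AbsRing R_CompleteNormedModule c d); auto.
intros n. change (Rabs (c n) <= d n). rewrite Rabs_right; [|apply Rle_ge]; apply H.
Qed.

Lemma region (z s0 : C) (r : R) : Cmod (z - s0)%C < r -> fst s0 - r < fst z /\ Cmod z <= Cmod s0 + r.
Proof.
intros H. split.
- pose proof (Cmod_re_le (z - s0)%C). simpl in H0.
  pose proof (Rle_abs (- (fst z + - fst s0))). rewrite Rabs_Ropp in H1. lra.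
- pose proof (Cmod_triangle s0 (z - s0)%C). replace (s0 + (z - s0))%C with z in H0 by ring. lra.
Qed.

Lemma ep_cprod a s N : euler_partial a s N = cprod (fun k => euler_factor (a k) s) N.
Proof. induction N; simpl; auto. rewrite IHN. reflexivity. Qed.

Lemma ln_pos_ge a0 x : 1 < a0 -> a0 <= x -> 0 <= ln x.
Proof. intros. rewrite <- ln_1. apply ln_le; lra. Qed.

Lemma E_conv (x : nat -> R) (a0 : R) : 1 < a0 -> (forall n, a0 <= x n) ->
  (forall lam, 1 < lam -> ex_series (fun n => exp (- lam * ln (x n)))) ->
  forall s, 1 < fst s -> exists L, Ccv (cprod (fun k => euler_factor (x k) s)) L.
Proof.
intros Ha0 Hx Hsum s Hs.
apply (prod_conv _ (fun k => exp (- fst s * ln (x k)) / (1 - exp (- fst s * ln a0)))).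
- intros k. apply (uE_minus1 a0 (fst s) s Ha0 ltac:(lra) (Rle_refl _) (x k) (Hx k)).
- apply ex_series_div. apply Hsum. auto.
Qed.

Lemma E_anal (x : nat -> R) (a0 : R) : 1 < a0 -> (forall n, a0 <= x n) ->
  (forall lam, 1 < lam -> ex_series (fun n => exp (- lam * ln (x n)))) ->
  forall s0, 1 < fst s0 ->
  exists l, CD (fun s => climit (cprod (fun k => euler_factor (x k) s))) s0 l.
Proof.
intros Ha0 Hx Hsum s0 Hs0.
set (r := (fst s0 - 1) / 2).
assert (Hr : 0 < r) by (unfold r; lra).
set (sig := 1 + r).
set (q := exp (- sig * ln a0)).
assert (Hq : q < 1) by (apply q_lt1; unfold sig; lra).
assert (Hreg : forall z, Cmod (z - s0)%C < r -> sig <= fst z).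
{ intros z Hz. destruct (region z s0 r Hz). unfold sig, r in *. lra. }
apply (GL (fun n => euler_factor (x n)) (fun n z => duE (x n) z)
  (fun n => exp (- sig * ln (x n)) / (1 - q))
  (fun n => ln (x n) * exp (- sig * ln (x n)) / ((1 - q) * (1 - q))) s0 r); auto.
- intros n z Hz. apply (CD_E a0 sig z Ha0 ltac:(unfold sig; lra) (Hreg z Hz) (x n) (Hx n)).
- intros n z Hz. apply (uE_minus1 a0 sig z Ha0 ltac:(unfold sig; lra) (Hreg z Hz) (x n) (Hx n)).
- intros n z Hz. apply (duE_bound a0 sig z Ha0 ltac:(unfold sig; lra) (Hreg z Hz) (x n) (Hx n)).
- apply ex_series_div. apply Hsum. unfold sig; lra.
- apply (ex_series_dom _ (fun n => exp (- (sig - r/2) * ln (x n)) / (r/2) / ((1 - q) * (1 - q)))).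
  + intros n. pose proof (ln_pos_ge a0 (x n) Ha0 (Hx n)). pose proof (exp_pos (- sig * ln (x n))).
    assert (0 < (1 - q) * (1 - q)) by nra.
    split.
    * apply Rdiv_le_0_compat; auto. nra.
    * unfold Rdiv. apply Rmult_le_compat_r. left; apply Rinv_0_lt_compat; auto.
      apply (ln_mul_exp_bound (x n) sig (r/2)). pose proof (Hx n); lra. lra.
  + apply ex_series_div. apply ex_series_div. apply Hsum. unfold sig; lra.
- intros z Hz. apply climit_spec. destruct (region z s0 r Hz).
  apply (E_conv x a0 Ha0 Hx Hsum z). unfold r in *; lra.
Qed.

Lemma D0_series (al be : nat -> R) (a0 sig K : R) : 1 < a0 -> (forall n, a0 <= al n) ->
  (forall n, al n <= be n) -> (forall n, be n <= al (S n)) -> 0 < sig -> 0 <= K ->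
  ex_series (fun n => D0 sig K (al n) (be n)).
Proof.
intros Ha0 Hal Hab Hba Hs HK.
apply (ex_series_ext (fun n => (fun u => K / sig * exp (- sig * u)) (ln (al n)) - (fun u => K / sig * exp (- sig * u)) (ln (be n)))).
{ intros n. unfold D0. simpl. ring. }
apply (tele_series (fun n => ln (al n)) (fun n => ln (be n)) (fun u => K / sig * exp (- sig * u))).
- intros n. apply (ln_pos_ge a0); auto.
- intros n. apply ln_le. pose proof (Hal n); lra. auto.
- intros n. apply ln_le. pose proof (Hal n); pose proof (Hab n); lra. auto.
- intros u v Hu Huv. apply Rmult_le_compat_l. apply Rdiv_le_0_compat; lra. apply G0_mono; auto.
- intros u Hu. apply Rmult_le_pos. apply Rdiv_le_0_compat; lra. left; apply exp_pos.
Qed.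

Lemma D1_series (al be : nat -> R) (a0 sig K : R) : 1 < a0 -> (forall n, a0 <= al n) ->
  (forall n, al n <= be n) -> (forall n, be n <= al (S n)) -> 0 < sig -> 0 <= K ->
  ex_series (fun n => D1 sig K (al n) (be n)).
Proof.
intros Ha0 Hal Hab Hba Hs HK.
apply (ex_series_ext (fun n => G1 sig K (ln (al n)) - G1 sig K (ln (be n)))).
{ intros n. reflexivity. }
apply (tele_series (fun n => ln (al n)) (fun n => ln (be n)) (G1 sig K)).
- intros n. apply (ln_pos_ge a0); auto.
- intros n. apply ln_le. pose proof (Hal n); lra. auto.
- intros n. apply ln_le. pose proof (Hal n); pose proof (Hab n); lra. auto.
- intros u v Hu Huv. apply G1_mono; auto.
- intros u Hu. apply G1_nonneg; auto.
Qed.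

Lemma g_conv (al be : nat -> R) (a0 : R) : 1 < a0 -> (forall n, a0 <= al n) ->
  (forall n, al n <= be n) -> (forall n, be n <= al (S n)) ->
  forall s, 0 < fst s -> exists L, Ccv (cprod (fun k => gF (al k) (be k) s)) L.
Proof.
intros Ha0 Hal Hab Hba s Hs.
apply (prod_conv _ (fun k => D0 (fst s) (Cmod s) (al k) (be k) / (1 - exp (- fst s * ln a0)))).
- intros k. apply (g_minus1 a0 (fst s) (Cmod s) s Ha0 Hs (Rle_refl _) (Rle_refl _) (al k) (be k) (Hal k) (Hab k)).
- apply ex_series_div. apply (D0_series al be a0); auto. apply Cmod_ge_0.
Qed.

Lemma v_conv (al be : nat -> R) (a0 : R) : 1 < a0 -> (forall n, a0 <= al n) ->
  (forall n, al n <= be n) -> (forall n, be n <= al (S n)) ->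
  forall s, 0 < fst s -> exists L, Ccv (cprod (fun k => vF (al k) (be k) s)) L.
Proof.
intros Ha0 Hal Hab Hba s Hs.
apply (prod_conv _ (fun k => D0 (fst s) (Cmod s) (al k) (be k) / (1 - exp (- fst s * ln a0)))).
- intros k. apply (v_minus1 a0 (fst s) (Cmod s) s Ha0 Hs (Rle_refl _) (Rle_refl _) (al k) (be k) (Hal k) (Hab k)).
- apply ex_series_div. apply (D0_series al be a0); auto. apply Cmod_ge_0.
Qed.

Lemma g_anal (al be : nat -> R) (a0 : R) : 1 < a0 -> (forall n, a0 <= al n) ->
  (forall n, al n <= be n) -> (forall n, be n <= al (S n)) ->
  forall s0, 0 < fst s0 ->
  exists l, CD (fun s => climit (cprod (fun k => gF (al k) (be k) s))) s0 l.
Proof.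
intros Ha0 Hal Hab Hba s0 Hs0.
set (r := fst s0 / 2).
assert (Hr : 0 < r) by (unfold r; lra).
set (sig := r).
set (K := Cmod s0 + r).
assert (HK : 0 <= K) by (unfold K; pose proof (Cmod_ge_0 s0); lra).
set (q := exp (- sig * ln a0)).
assert (Hq : q < 1) by (apply q_lt1; unfold sig; lra).
assert (Hreg : forall z, Cmod (z - s0)%C < r -> sig <= fst z /\ Cmod z <= K).
{ intros z Hz. destruct (region z s0 r Hz). unfold sig, K, r in *. split; lra. }
apply (GL (fun n => gF (al n) (be n)) (fun n z => dgF (al n) (be n) z)
  (fun n => D0 sig K (al n) (be n) / (1 - q))
  (fun n => D1 sig K (al n) (be n) / (1 - q) + D0 sig K (al n) (be n) * (1 / sig) / ((1 - q) * (1 - q))) s0 r); auto.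
- intros n z Hz. destruct (Hreg z Hz).
  apply (CD_g a0 sig z Ha0 Hr H (al n) (be n) (Hal n)).
- intros n z Hz. destruct (Hreg z Hz).
  apply (g_minus1 a0 sig K z Ha0 Hr H H0 (al n) (be n) (Hal n) (Hab n)).
- intros n z Hz. destruct (Hreg z Hz).
  apply (dg_bound a0 sig K z Ha0 Hr H H0 (al n) (be n) (Hal n) (Hab n)).
- apply ex_series_div. apply (D0_series al be a0); auto.
- apply ex_series_plusR.
  + apply ex_series_div. apply (D1_series al be a0); auto.
  + apply ex_series_div.
    apply (ex_series_ext (fun n => D0 sig K (al n) (be n) / sig)).
    { intros n. unfold Rdiv. rewrite Rmult_1_l. reflexivity. }
    apply ex_series_div. apply (D0_series al be a0); auto.
- intros z Hz. apply climit_spec. destruct (region z s0 r Hz).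
  apply (g_conv al be a0 Ha0 Hal Hab Hba z). unfold r in *; lra.
Qed.

Lemma Ccv_ext p q L : (forall n, p n = q n) -> Ccv p L -> Ccv q L.
Proof. intros H HL eps Heps. destruct (HL eps Heps) as [N HN]. exists N. intros n Hn. rewrite <- H. auto. Qed.

Lemma Ccv_const (c : C) : Ccv (fun _ => c) c.
Proof. intros eps Heps. exists O. intros. replace (c - c)%C with (RtoC 0) by ring. rewrite Cmod_0. lra. Qed.

Theorem mainTheorem3 (alpha beta : nat -> R)
  (halpha_incr : forall n, alpha n <= alpha (S n))
  (hbeta_incr : forall n, beta n <= beta (S n))
  (hab : forall n, alpha n <= beta n)
  (hba : forall n, beta n <= alpha (S n))
  (halpha1 : 1 < alpha 0%nat)
  (hsum : forall lambda, 1 < lambda ->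
     ex_series (fun n => Rpower (alpha n) (- lambda))) :
  exists E1 E2 : C -> C,
    (forall s, half_plane 1 s -> euler_product_converges_to alpha s (E1 s)) /\
    (forall s, half_plane 1 s -> euler_product_converges_to beta s (E2 s)) /\
    analytic_on (half_plane 1) E1 /\
    analytic_on (half_plane 1) E2 /\
    (exists f : C -> C,
       analytic_on (half_plane 0) f /\
       (forall s, half_plane 0 s -> f s <> 0%C) /\
       (forall s, half_plane 1 s -> E1 s = Cmult (E2 s) (f s))).
Proof.
set (a0 := alpha 0%nat).
assert (Hal : forall n, a0 <= alpha n).
{ intros n. induction n. unfold a0; lra. specialize (halpha_incr n). lra. }
assert (Hbe : forall n, a0 <= beta n) by (intros n; specialize (Hal n); specialize (hab n); lra).
assert (Hsa : forall lam, 1 < lam -> ex_series (fun n => exp (- lam * ln (alpha n)))).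
{ intros lam Hl. exact (hsum lam Hl). }
assert (Hsb : forall lam, 1 < lam -> ex_series (fun n => exp (- lam * ln (beta n)))).
{ intros lam Hl. apply (ex_series_dom _ (fun n => exp (- lam * ln (alpha n)))); [|apply Hsa; auto].
  intros n. split. left; apply exp_pos. apply exp_mono.
  assert (ln (alpha n) <= ln (beta n)) by (apply ln_le; [pose proof (Hal n); unfold a0 in *; lra| auto]). nra. }
set (E1 := fun s => climit (cprod (fun k => euler_factor (alpha k) s))).
set (E2 := fun s => climit (cprod (fun k => euler_factor (beta k) s))).
set (f := fun s => climit (cprod (fun k => gF (alpha k) (beta k) s))).
assert (CE1 : forall s, 1 < fst s -> Ccv (cprod (fun k => euler_factor (alpha k) s)) (E1 s)).
{ intros s Hs. apply climit_spec. apply (E_conv alpha a0); auto. }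
assert (CE2 : forall s, 1 < fst s -> Ccv (cprod (fun k => euler_factor (beta k) s)) (E2 s)).
{ intros s Hs. apply climit_spec. apply (E_conv beta a0); auto. }
assert (Cf : forall s, 0 < fst s -> Ccv (cprod (fun k => gF (alpha k) (beta k) s)) (f s)).
{ intros s Hs. apply climit_spec. apply (g_conv alpha beta a0); auto. }
exists E1, E2. split; [|split; [|split; [|split]]].
- intros s Hs. unfold half_plane, Re in Hs. unfold euler_product_converges_to.
  apply Ccv_filterlim. apply (Ccv_ext (cprod (fun k => euler_factor (alpha k) s))).
  { intros n. symmetry. apply ep_cprod. } apply CE1. lra.
- intros s Hs. unfold half_plane, Re in Hs. unfold euler_product_converges_to.
  apply Ccv_filterlim. apply (Ccv_ext (cprod (fun k => euler_factor (beta k) s))).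
  { intros n. symmetry. apply ep_cprod. } apply CE2. lra.
- intros z Hz. unfold half_plane, Re in Hz. apply (E_anal alpha a0); auto.
- intros z Hz. unfold half_plane, Re in Hz. apply (E_anal beta a0); auto.
- exists f. split; [|split].
  + intros z Hz. unfold half_plane, Re in Hz. apply (g_anal alpha beta a0); auto.
  + intros s Hs Hf0. unfold half_plane, Re in Hs.
    destruct (v_conv alpha beta a0 halpha1 Hal hab hba s ltac:(lra)) as [Lv HLv].
    pose proof (Ccv_mult _ _ _ _ (Cf s ltac:(lra)) HLv) as HM.
    assert (Hone : forall n, (cprod (fun k => gF (alpha k) (beta k) s) n * cprod (fun k => vF (alpha k) (beta k) s) n)%C = RtoC 1).
    { intros n. induction n; simpl. ring.
      assert (E : (gF (alpha n) (beta n) s * vF (alpha n) (beta n) s)%C = RtoC 1).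
      { pose proof (om_nz a0 (fst s) s halpha1 ltac:(lra) (Rle_refl _) (alpha n) (Hal n)).
        pose proof (om_nz a0 (fst s) s halpha1 ltac:(lra) (Rle_refl _) (beta n) (Hbe n)).
        unfold gF, vF, euler_factor. field. auto. }
      transitivity ((cprod (fun k => gF (alpha k) (beta k) s) n * cprod (fun k => vF (alpha k) (beta k) s) n) *
        (gF (alpha n) (beta n) s * vF (alpha n) (beta n) s))%C. ring. rewrite IHn, E. ring. }
    pose proof (Ccv_unique _ _ _ (Ccv_ext _ _ _ Hone HM) (Ccv_const (RtoC 1))) as HU.
    rewrite Hf0 in HU. replace (RtoC 0 * Lv)%C with (RtoC 0) in HU by ring.
    apply RtoC_inj in HU. lra.
  + intros s Hs. unfold half_plane, Re in Hs.
    pose proof (Ccv_mult _ _ _ _ (CE2 s ltac:(lra)) (Cf s ltac:(lra))) as HM.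
    apply (Ccv_unique (cprod (fun k => euler_factor (alpha k) s))). apply CE1; lra.
    assert (Heq : forall n, (cprod (fun k => euler_factor (beta k) s) n * cprod (fun k => gF (alpha k) (beta k) s) n)%C
        = cprod (fun k => euler_factor (alpha k) s) n).
    { intros n. induction n; simpl. ring.
      rewrite <- IHn.
      pose proof (om_nz a0 (fst s) s halpha1 ltac:(lra) (Rle_refl _) (alpha n) (Hal n)).
      pose proof (om_nz a0 (fst s) s halpha1 ltac:(lra) (Rle_refl _) (beta n) (Hbe n)).
      unfold gF, euler_factor. field. auto. }
    exact (Ccv_ext _ _ _ Heq HM).
Qed.
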